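(* Let $f:\mathbb{R}^n\to\mathbb{R}$ be twice differentiable, let $x_0\in\mathbb{R}^n$ and $S_f=\{x : f(x)\le f(x_0)\}$. Assume there exist constants $M \ge m>0$ such that $M\|z\|^2 \ge z^{T}\nabla^2 f(x) z \ge m\|z\|^2$ for all $x\in S_f$ and all $z\in\mathbb{R}^n$. Let $x_k\in S_f$, $g_k=\nabla f(x_k)$, $\Delta t_k>0$, and let the preconditioner $H_k$ be given by the switching rule: either $$H_k = I - \frac{y s^{T} + s y^{T}}{y^{T}s} + 2\frac{y^{T}y}{(y^{T}s)^2} s s^{T}$$ for some vectors $s,y\in\mathbb{R}^n$ with $|s^{T}y|>\theta\|s\|^2$ (with $\theta>0$), or $H_k=(\nabla^2 f(x_k))^{-1}$. Let $s_k = -\frac{\Delta t_k}{1+\Delta t_k} H_k g_k$ and define $m_k(s) = \frac{1+0.5\Delta t_k}{1+\Delta t_k}\, g_k^{T}s$. Then there is a positive constant $c_m$ (independent of $k$) such that $$m_k(0)-m_k(s_k) \ge \frac{c_m \Delta t_k}{2(1+\Delta t_k)}\|g_k\|^2 .$$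
   Context: $\|\cdot\|$ is the Euclidean norm, $I$ the identity matrix. $m_k$ is the simplified local model of $f(x_k+s)-f(x_k)$ used in the explicit continuation method $x_{k+1}=x_k+s_k$, $s_k=\frac{\Delta t_k}{1+\Delta t_k}s_k^N$, $s_k^N=-H_kg_k$. *)

(* Defs.v *)
From HB Require Import structures.
From mathcomp Require Import all_boot all_order all_algebra.
From mathcomp Require Import all_classical all_reals all_analysis.
Set Implicit Arguments. Unset Strict Implicit. Unset Printing Implicit Defensive.
Import Order.TTheory GRing.Theory Num.Theory.
Import numFieldNormedType.Exports.
Local Open Scope ring_scope.

Definition dotv {R : realType} {n : nat} (u v : 'cV[R]_n) : R := (u^T *m v) 0 0.
Definition sqnorm {R : realType} {n : nat} (z : 'cV[R]_n) : R := dotv z z.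
Definition qform {R : realType} {n : nat} (A : 'M[R]_n) (z : 'cV[R]_n) : R :=
  (z^T *m A *m z) 0 0.

Definition ebasis {R : realType} {n : nat} (i : 'I_n) : 'cV[R]_n := delta_mx i 0.

Definition grad {R : realType} {n : nat} (f : 'cV[R]_n -> R) (x : 'cV[R]_n) : 'cV[R]_n :=
  \col_i ('D_(ebasis i) f x).

Definition hess {R : realType} {n : nat} (f : 'cV[R]_n -> R) (x : 'cV[R]_n) : 'M[R]_n :=
  \matrix_(i, j) ('D_(ebasis j) (fun y => 'D_(ebasis i) f y) x).

Definition twice_differentiable {R : realType} {n : nat} (f : 'cV[R]_n -> R) : Prop :=
  (forall x, differentiable f x) /\ (forall x, differentiable (grad f) x).

Definition qn_precond {R : realType} {n : nat} (s y : 'cV[R]_n) : 'M[R]_n :=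
  1%:M - (dotv y s)^-1 *: (y *m s^T + s *m y^T)
       + (2 * dotv y y / (dotv y s) ^+ 2) *: (s *m s^T).

Definition model {R : realType} {n : nat} (dt : R) (g s : 'cV[R]_n) : R :=
  (1 + dt / 2) / (1 + dt) * dotv g s.

(* Main.v *)
Require Import Defs.
From HB Require Import structures.
From mathcomp Require Import all_boot all_order all_algebra.
From mathcomp Require Import all_classical all_reals all_analysis.
Import Order.TTheory GRing.Theory Num.Theory.
Local Open Scope ring_scope.
From mathcomp Require Import ring lra.
Import numFieldNormedType.Exports.
Set Warnings "-notation-overridden,-ambiguous-paths,-notation-incompatible-prefix".

Section Sch.
Local Set Implicit Arguments.
Local Unset Strict Implicit.
Context {R : realType} {V : normedModType R}.

Lemma expand_diff (G : V -> R) x : differentiable G x -> forall eps, 0 < eps ->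
  exists2 d, 0 < d & forall v, `|v| < d -> `|G (x + v) - G x - 'd G x v| <= eps * `|v|.
Proof.
move=> dG eps e0.
have [_ H] := (diff_locallyP x G).1 dG.
move/eqaddoP: H => /(_ eps e0) /nbhs_normP [d d0 Hd].
exists d => // v vd.
have := Hd v; rewrite /= sub0r normrN => /(_ vd).
by rewrite !fctE /= [v + x]addrC opprD addrA.
Qed.

Lemma line_derive (f : V -> R) c a t : derivable f (c + t *: a) a ->
  is_derive t 1 (fun u : R => f (c + u *: a)) ('D_a f (c + t *: a)).
Proof.
move=> H.
have E : (fun h : R => h^-1 *: (((fun u : R => f (c + u *: a)) \o shift t) (h *: 1) - f (c + t *: a)))
   = (fun h : R => h^-1 *: ((f \o shift (c + t *: a)) (h *: a) - f (c + t *: a))).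
  apply/funext => h /=; congr (_ *: (f _ - _)).
  by rewrite scalerDl /GRing.scale /= mulr1 addrCA.
split; last by rewrite /derive E.
by move: H; rewrite /derivable E.
Qed.

Lemma delta_est (f : V -> R) x a b (eps d h : R) :
  (forall y, differentiable f y) -> 0 < h -> 0 < eps ->
  (forall v, `|v| < d -> `|'D_a f (x + v) - 'D_a f x - 'd (fun y => 'D_a f y) x v| <= eps * `|v|) ->
  h * (`|a| + `|b|) < d ->
  `|(f (x + h *: b + h *: a) - f (x + h *: a)) - (f (x + h *: b) - f x)
     - h ^+ 2 * 'd (fun y => 'D_a f y) x b| <= 2 * eps * h ^+ 2 * (`|a| + `|b|).
Proof.
move=> df h0 e0 Hd hd.
set Ga := (fun y => 'D_a f y).
set L := 'd Ga x.
pose p1 := fun t : R => f ((x + h *: b) + t *: a).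
pose p2 := fun t : R => f (x + t *: a).
pose phi := (p1 - p2 : R -> R).
pose dphi := fun t : R => 'D_a f ((x + h *: b) + t *: a) - 'D_a f (x + t *: a).
have Dphi : forall t : R, is_derive t 1 phi (dphi t).
  move=> t; apply: (@is_deriveB _ _ _ p1 p2).
    by apply: line_derive; exact: diff_derivable.
  by apply: line_derive; exact: diff_derivable.
case: (MVT h0 (fun t _ => Dphi t)).
  apply: continuous_subspaceT => t.
  apply: differentiable_continuous; apply/derivable1_diffP.
  exact: (@ex_derive _ _ _ _ _ _ _ (Dphi t)).
move=> xi xiin Hxi.
move: xiin; rewrite in_itv /= => /andP[xi0 xih].
have E1 : phi h - phi 0 = (f (x + h *: b + h *: a) - f (x + h *: a)) - (f (x + h *: b) - f x).
  by rewrite /phi !fctE /p1 /p2 !scale0r !addr0.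
rewrite -E1 Hxi subr0.
set v1 := h *: b + xi *: a.
set v2 := xi *: a.
have Ev1 : x + h *: b + xi *: a = x + v1 by rewrite addrA.
have Ev2 : x + xi *: a = x + v2 by [].
have LE : L v1 - L v2 = h * L b.
  by rewrite /v1 linearD addrK linearZ.
have -> : dphi xi * h - h ^+ 2 * L b =
   h * ((Ga (x + v1) - Ga x - L v1) - (Ga (x + v2) - Ga x - L v2)).
  rewrite /dphi Ev1 Ev2 -/Ga expr2 -mulrA -LE.
  rewrite /Ga.
  move: ('D_a f (x + v1)) ('D_a f (x + v2)) ('D_a f x) (L v1) (L v2) => p q r s u /=.
  ring.
have Na : `|a| >= 0 by [].
have Nb : `|b| >= 0 by [].
have nv1 : `|v1| <= h * (`|a| + `|b|).
  rewrite /v1 (le_trans (ler_normD _ _)) // !normrZ (gtr0_norm h0) (gtr0_norm xi0).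
  have : xi * `|a| <= h * `|a| by rewrite ler_wpM2r // ltW.
  lra.
have nv2 : `|v2| <= h * (`|a| + `|b|).
  rewrite /v2 normrZ (gtr0_norm xi0).
  have : xi * `|a| <= h * `|a| by rewrite ler_wpM2r // ltW.
  have : 0 <= h * `|b| by rewrite mulr_ge0 // ltW.
  lra.
have r1 := Hd v1 (le_lt_trans nv1 hd).
have r2 := Hd v2 (le_lt_trans nv2 hd).
rewrite normrM (gtr0_norm h0).
have : `|Ga (x + v1) - Ga x - L v1 - (Ga (x + v2) - Ga x - L v2)| <= 2 * eps * (h * (`|a| + `|b|)).
  rewrite (le_trans (ler_normB _ _)) //.
  have : eps * `|v1| <= eps * (h * (`|a| + `|b|)) by rewrite ler_wpM2l // ltW.
  have : eps * `|v2| <= eps * (h * (`|a| + `|b|)) by rewrite ler_wpM2l // ltW.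
  move: r1 r2; rewrite -/Ga -/L. lra.
move=> H.
rewrite [X in _ <= X](_ : _ = h * (2 * eps * (h * (`|a| + `|b|)))); last by ring.
by rewrite ler_pM2l.
Qed.

Lemma le0_eps (y c : R) : 0 <= c -> (forall e, 0 < e -> y <= e * c) -> y <= 0.
Proof.
move=> c0 H; rewrite leNgt; apply/negP => y0.
have c1 : 0 < 2 * (c + 1) by lra.
have e0 : 0 < y / (2 * (c + 1)) by rewrite divr_gt0.
have := H _ e0.
set e := y / (2 * (c + 1)).
have Ee : e * (2 * (c + 1)) = y by rewrite /e mulfVK // gt_eqF.
have : e * c < e * (2 * (c + 1)) by rewrite ltr_pM2l //; lra.
rewrite Ee => ?; lra.
Qed.

Lemma fin_step (A p q h e K : R) : 0 < h ->
  `|A - h ^+ 2 * p| <= 2 * e * h ^+ 2 * K ->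
  `|A - h ^+ 2 * q| <= 2 * e * h ^+ 2 * K -> `|p - q| <= e * (4 * K).
Proof.
move=> h0 E1 E2.
have : `|h ^+ 2 * (p - q)| <= h ^+ 2 * (e * (4 * K)).
  have -> : h ^+ 2 * (p - q) = (A - h ^+ 2 * q) - (A - h ^+ 2 * p) by ring.
  apply: le_trans (ler_normB _ _) _.
  have -> : h ^+ 2 * (e * (4 * K)) = 2 * e * h ^+ 2 * K + 2 * e * h ^+ 2 * K by ring.
  exact: lerD.
have h2 : 0 < h ^+ 2 by rewrite exprn_gt0.
rewrite normrM (ger0_norm (ltW h2)) => H.
by rewrite -(ler_pM2l h2).
Qed.

Lemma schwarz (f : V -> R) x a b :
  (forall y, differentiable f y) ->
  differentiable (fun y => 'D_a f y) x -> differentiable (fun y => 'D_b f y) x ->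
  'D_b (fun y => 'D_a f y) x = 'D_a (fun y => 'D_b f y) x.
Proof.
move=> df da db.
rewrite (deriveE _ da) (deriveE _ db).
apply/eqP; rewrite -subr_eq0 -normr_eq0; apply/eqP/le_anti/andP; split => //.
have K0 : 0 <= `|a| + `|b| by rewrite addr_ge0.
apply: (le0_eps (c := 4 * (`|a| + `|b|))); first by rewrite mulr_ge0.
move=> eps e0.
have [da' da0 Ha] := expand_diff da e0.
have [db' db0 Hb] := expand_diff db e0.
pose d := Num.min da' db'.
have d0 : 0 < d by rewrite lt_min da0 db0.
pose h := d / (2 * ((`|a| + `|b|) + 1)).
have h0 : 0 < h by rewrite divr_gt0 //; lra.
have hK : h * (`|a| + `|b|) < d.
  have E : h * (2 * ((`|a| + `|b|) + 1)) = d by rewrite /h mulfVK // gt_eqF //; lra.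
  rewrite -[X in _ < X]E ltr_pM2l //; lra.
have hK' : h * (`|b| + `|a|) < d by rewrite addrC.
have Ha' : forall v, `|v| < d -> `|'D_a f (x + v) - 'D_a f x - 'd (fun y => 'D_a f y) x v| <= eps * `|v|.
  move=> v vd; apply: Ha; apply: lt_le_trans vd _; by rewrite /d ge_min lexx.
have Hb' : forall v, `|v| < d -> `|'D_b f (x + v) - 'D_b f x - 'd (fun y => 'D_b f y) x v| <= eps * `|v|.
  move=> v vd; apply: Hb; apply: lt_le_trans vd _; by rewrite /d ge_min lexx orbT.
have E1 := delta_est df h0 e0 Ha' hK.
have E2 := delta_est df h0 e0 Hb' hK'.
rewrite [`|b| + `|a|]addrC [x + h *: a + h *: b]addrAC in E2.
apply: fin_step h0 E1 _.
move: E2.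
set A1 := f (x + h *: b + h *: a).
set B1 := f (x + h *: a).
set C1 := f (x + h *: b).
have -> : A1 - B1 - (C1 - f x) = A1 - C1 - (B1 - f x).
  rewrite !opprB !addrA. clearbody A1 B1 C1. move: (f x) => fx. ring.
by [].
Qed.
End Sch.

Section LA.
Context {R : realType} {n : nat}.
Implicit Types (u v w : 'cV[R]_n) (A : 'M[R]_n).

Lemma dotv_sum u v : dotv u v = \sum_i u i 0 * v i 0.
Proof. by rewrite /dotv mxE; apply: eq_bigr => i _; rewrite mxE. Qed.

Lemma dotvC u v : dotv u v = dotv v u.
Proof. by rewrite !dotv_sum; apply: eq_bigr => i _; rewrite mulrC. Qed.

Lemma sqnorm_ge0 u : 0 <= sqnorm u.
Proof. by rewrite /sqnorm dotv_sum; apply: sumr_ge0 => i _; rewrite -expr2 sqr_ge0. Qed.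

Lemma dotvDr u v w : dotv u (v + w) = dotv u v + dotv u w.
Proof. by rewrite !dotv_sum -big_split; apply: eq_bigr => i _; rewrite mxE mulrDr. Qed.
Lemma dotvNr u v : dotv u (- v) = - dotv u v.
Proof. by rewrite !dotv_sum -sumrN; apply: eq_bigr => i _; rewrite mxE mulrN. Qed.
Lemma dotvZr u v (a : R) : dotv u (a *: v) = a * dotv u v.
Proof. by rewrite !dotv_sum mulr_sumr; apply: eq_bigr => i _; rewrite mxE mulrCA. Qed.
Lemma dotvDl u v w : dotv (v + w) u = dotv v u + dotv w u.
Proof. by rewrite dotvC dotvDr !(dotvC u). Qed.
Lemma dotvNl u v : dotv (- v) u = - dotv v u.
Proof. by rewrite dotvC dotvNr dotvC. Qed.
Lemma dotvZl u v (a : R) : dotv (a *: v) u = a * dotv v u.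
Proof. by rewrite dotvC dotvZr dotvC. Qed.
Lemma dotv0r u : dotv u 0 = 0.
Proof. by rewrite /dotv mulmx0 mxE. Qed.

Lemma dotv_mulmx u A v : dotv u (A *m v) = dotv (A^T *m u) v.
Proof. by rewrite /dotv trmx_mul trmxK mulmxA. Qed.

Lemma qformE A z : qform A z = dotv z (A *m z).
Proof. by rewrite /qform /dotv mulmxA. Qed.

Lemma outer_mul u v w : (u *m v^T) *m w = dotv v w *: u.
Proof. by rewrite -mulmxA [v^T *m w]mx11_scalar mul_mx_scalar. Qed.

Lemma qn_bound (s y g : 'cV[R]_n) : 1 / 2 * sqnorm g <= dotv g (qn_precond s y *m g).
Proof.
rewrite /qn_precond !mulmxDl mulNmx -!scalemxAl mulmxDl !outer_mul mul1mx.
set c := (dotv y s)^-1.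
have -> : 2 * dotv y y / dotv y s ^+ 2 = 2 * dotv y y * c ^+ 2 by rewrite /c exprVn.
have nn := sqnorm_ge0 (g - (2 * c * dotv s g) *: y).
move: nn; rewrite /sqnorm.
rewrite !(dotvDl, dotvDr, dotvNl, dotvNr, dotvZl, dotvZr).
rewrite !(dotvC y g) !(dotvC s g).
move: (dotv g g) (dotv g s) (dotv g y) (dotv y y) c => G p q Y c0 H.
nra.
Qed.

Lemma newton_bound A (m M : R) (g : 'cV[R]_n) : 0 < m -> m <= M -> A^T = A ->
  (forall z, m * sqnorm z <= qform A z /\ qform A z <= M * sqnorm z) ->
  Num.min m M^-1 * sqnorm g <= dotv g (invmx A *m g).
Proof.
move=> m0 mM As HA.
have M0 : 0 < M by apply: lt_le_trans mM.
have G0 := sqnorm_ge0 g.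
case: (boolP (A \in unitmx)) => Au; last first.
  rewrite invmx_out; last by rewrite inE.
  rewrite -qformE; apply: le_trans (proj1 (HA g)).
  by rewrite ler_wpM2r // ge_min lexx.
set z := invmx A *m g.
have Az : A *m z = g by rewrite /z mulKVmx.
set D := dotv g z.
have E1 : qform A z = D by rewrite qformE Az dotvC.
pose t := M^-1.
have t0 : 0 < t by rewrite invr_gt0.
have P := proj1 (HA (z - t *: g)).
have Q := proj2 (HA g).
have Pz : 0 <= qform A (z - t *: g).
  apply: (le_trans _ P); exact: mulr_ge0 (ltW m0) (sqnorm_ge0 _).
move: Pz; rewrite qformE mulmxBr -scalemxAr Az.
rewrite !(dotvDl, dotvDr, dotvNl, dotvNr, dotvZl, dotvZr).
rewrite dotv_mulmx As Az -/D (dotvC z g) -/D.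
rewrite qformE in Q.
move: (dotv g (A *m g)) Q => q Q.
move=> H.
have tM : t * M = 1 by rewrite /t mulVf // gt_eqF.
have : t * t * q <= t * t * (M * sqnorm g) by rewrite ler_wpM2l // mulr_ge0 // ltW.
have E : t * t * (M * sqnorm g) = t * sqnorm g.
  by rewrite -mulrA (mulrA t M) tM mul1r.
rewrite E /sqnorm; rewrite !mulrA in H.
move=> H1.
have H2 : t * dotv g g <= D.
  by move: H H1; move: (t * t * q) (t * dotv g g) => a b; lra.
apply: (le_trans _ H2); rewrite ler_wpM2r // ge_min lexx orbT //.
Qed.
End LA.

Lemma hess_sym (R : realType) (n : nat) (f : 'cV[R]_n -> R) (x : 'cV[R]_n) :
  twice_differentiable f -> (hess f x)^T = hess f x.
Proof.
move=> [df dg].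
have dG : forall k, differentiable (fun y => 'D_(ebasis k) f y) x.
  move=> k.
  have -> : (fun y => 'D_(ebasis k) f y) = (fun N : 'cV[R]_n => N k 0) \o grad f.
    by apply/funext => y; rewrite /= /grad mxE.
  apply: differentiable_comp; [exact: dg | exact: differentiable_coord].
apply/matrixP => i j; rewrite !mxE.
exact: (schwarz (a := ebasis j) (b := ebasis i) df (dG j) (dG i)).
Qed.

Theorem lemma2 (R : realType) (n : nat) (f : 'cV[R]_n -> R) (x0 : 'cV[R]_n)
    (m M theta : R) :
  twice_differentiable f ->
  0 < m -> m <= M -> 0 < theta ->
  (forall x z : 'cV[R]_n, f x <= f x0 ->
     m * sqnorm z <= qform (hess f x) z /\ qform (hess f x) z <= M * sqnorm z) ->
  exists cm : R, 0 < cm /\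
    forall (xk : 'cV[R]_n) (dt : R) (Hk : 'M[R]_n),
      f xk <= f x0 -> 0 < dt ->
      ((exists s y : 'cV[R]_n,
          theta * sqnorm s < `|dotv s y| /\ Hk = qn_precond s y)
       \/ Hk = invmx (hess f xk)) ->
      let gk := grad f xk in
      let sk := - (dt / (1 + dt)) *: (Hk *m gk) in
      cm * dt / (2 * (1 + dt)) * sqnorm gk <= model dt gk 0 - model dt gk sk.
Proof.
move=> tf m0 mM th0 HB.
have M0 : 0 < M by apply: lt_le_trans mM.
have h2 : (0 : R) < 1 / 2 by lra.
exists (Num.min (1 / 2) (Num.min m M^-1)); split.
  by rewrite !lt_min h2 m0 invr_gt0 M0.
move=> xk dt Hk fxk dt0 HH; cbv zeta; set gk := grad f xk.
set cm := Num.min (1 / 2) (Num.min m M^-1).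
have cm0 : 0 < cm by rewrite !lt_min h2 m0 invr_gt0 M0.
have key : cm * sqnorm gk <= dotv gk (Hk *m gk).
  case: HH => [[s [y [_ ->]]] | ->].
    apply: (le_trans _ (qn_bound s y gk)).
    by rewrite ler_wpM2r ?sqnorm_ge0 // ge_min lexx.
  apply: (le_trans _ (newton_bound (hess f xk) m M gk m0 mM (@hess_sym _ _ f xk tf) (fun z => HB xk z fxk))).
  by rewrite ler_wpM2r ?sqnorm_ge0 // ge_min lexx orbT.
rewrite /model dotv0r mulr0 sub0r dotvZr.
have G0 := sqnorm_ge0 gk.
move: key G0; move: (dotv gk (Hk *m gk)) (sqnorm gk) => D G key G0.
have u0 : 0 < 1 + dt by lra.
have kge : 1 / 2 <= (1 + dt / 2) / (1 + dt) by rewrite ler_pdivlMr //; lra.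
have a0 : 0 < dt / (1 + dt) by rewrite divr_gt0.
have -> : cm * dt / (2 * (1 + dt)) * G = dt / (1 + dt) * (cm * G) / 2.
  by field; rewrite gt_eqF.
have -> : - ((1 + dt / 2) / (1 + dt) * (- (dt / (1 + dt)) * D)) =
   (1 + dt / 2) / (1 + dt) * (dt / (1 + dt) * D) by ring.
move: kge a0; move: ((1 + dt / 2) / (1 + dt)) (dt / (1 + dt)) => k a kge a0.
have D0 : 0 <= D by apply: le_trans key; rewrite mulr_ge0 // ltW.
have : a * (cm * G) <= a * D by rewrite ler_wpM2l // ltW.
have : 1 / 2 * (a * D) <= k * (a * D) by rewrite ler_wpM2r // mulr_ge0 // ltW.
lra.
Qed.
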